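(* Let $n_*>2$ be an integer, $\phi:(n_*,+\infty)\to(1,+\infty)$ strictly increasing, and $\mathsf{G}\in\mathbb{G}(n_*,\phi)$. Then for every $x\in\mathsf{V}$ there exists $N_x\in\mathbb{N}$ such that, for all $N\ge N_x$, every $y\in\mathsf{B}(N,x)=\{y:\rho(x,y)\le N\}$ satisfies $n(y)\le n_*$ or $\phi(n(y))\le 2N$ (i.e. $\max_{y\in\mathsf{B}(N,x)}n(y)\le\phi^{-1}(2N)$).
   Context: $\mathsf{G}=(\mathsf{V},\mathsf{E})$ is a countable, connected, locally finite undirected graph; $n(x)$ is the degree, $\rho$ the path distance. For integer $n_*>2$, $\mathsf{V}_*=\{x:n(x)\le n_*\}$, $\mathsf{V}_*^c=\mathsf{V}\setminus\mathsf{V}_*$. For strictly increasing $\phi:(n_*,+\infty)\to(0,+\infty)$, $\mathbb{G}(n_*,\phi)$ is the family of graphs with $\rho(x,y)\ge\phi[\max\{n(x),n(y)\}]$ for all $x,y\in\mathsf{V}_*^c$. *)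

(* Defs.v *)
From Stdlib Require Import Reals List Arith.
Open Scope R_scope.

(* A locally finite simple undirected graph on a vertex type V is given by
   its neighbour lists: [nb x] lists (without repetition) the neighbours of x. *)

(* walk nb x p y : the list p = [z1; ...; zk] describes a walk
   x ~ z1 ~ ... ~ zk = y of length k = length p. *)
Fixpoint walk {V : Type} (nb : V -> list V) (x : V) (p : list V) (y : V) : Prop :=
  match p with
  | nil => x = y
  | z :: q => In z (nb x) /\ walk nb z q y
  end.

Definition is_graph {V : Type} (nb : V -> list V) : Prop :=
  (forall x, NoDup (nb x)) /\
  (forall x y, In y (nb x) -> In x (nb y)) /\
  (forall x, ~ In x (nb x)) /\
  (exists f : V -> nat, forall x y, f x = f y -> x = y) /\
  (forall x y, exists p, walk nb x p y).

Definition deg {V : Type} (nb : V -> list V) (x : V) : nat := length (nb x).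

Definition is_dist {V : Type} (nb : V -> list V) (x y : V) (d : nat) : Prop :=
  (exists p, walk nb x p y /\ length p = d) /\
  (forall p, walk nb x p y -> (d <= length p)%nat).

Definition in_family {V : Type} (nb : V -> list V) (nstar : nat) (phi : R -> R) : Prop :=
  forall x y d, (nstar < deg nb x)%nat -> (nstar < deg nb y)%nat -> x <> y ->
    is_dist nb x y d ->
    phi (INR (Nat.max (deg nb x) (deg nb y))) <= INR d.

(* Main.v *)
Require Import Defs.
From Stdlib Require Import Reals List Arith Lia Lra Classical.
Open Scope R_scope.

Lemma walk_app {V : Type} (nb : V -> list V) : forall p a b r c,
  walk nb a p b -> walk nb b r c -> walk nb a (p ++ r) c.
Proof.
  induction p as [|z q IH]; intros a b r c H1 H2; simpl in *.
  - subst; exact H2.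
  - destruct H1 as [Hz Hw]. split; [exact Hz| eapply IH; eauto].
Qed.


Lemma walk_rev {V : Type} (nb : V -> list V) :
  (forall x y, In y (nb x) -> In x (nb y)) ->
  forall p a b, walk nb a p b -> exists q, walk nb b q a /\ length q = length p.
Proof.
  intros Hs. induction p as [|z q IH]; intros a b H; simpl in *.
  - exists nil; simpl; split; [symmetry; exact H|reflexivity].
  - destruct H as [Hz Hw]. destruct (IH _ _ Hw) as [q' [Hq' Hl]].
    exists (q' ++ a :: nil). split.
    + eapply walk_app; [exact Hq'|]. simpl. split; [apply Hs; exact Hz|reflexivity].
    + rewrite length_app; simpl; lia.
Qed.

Lemma dist_exists {V : Type} (nb : V -> list V) (a b : V) :
  forall n, (exists p, walk nb a p b /\ length p = n) -> exists d, is_dist nb a b d /\ (d <= n)%nat.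
Proof.
  induction n as [n IH] using lt_wf_ind. intros Hn.
  destruct (classic (exists p, walk nb a p b /\ (length p < n)%nat)) as [[p [Hp Hl]]|Hno].
  - destruct (IH (length p) Hl) as [d [Hd Hdl]]; [exists p; auto|].
    exists d; split; [exact Hd| lia].
  - exists n; split; [split; [exact Hn|]|lia].
    intros p Hp. destruct (le_lt_dec n (length p)); auto.
    exfalso; apply Hno; exists p; auto.
Qed.

Lemma close_dist {V : Type} (nb : V -> list V) (x y z : V) d1 d2 :
  is_graph nb -> is_dist nb x y d1 -> is_dist nb x z d2 ->
  exists e, is_dist nb y z e /\ (e <= d1 + d2)%nat.
Proof.
  intros [_ [Hs _]] [[p1 [H1 L1]] _] [[p2 [H2 L2]] _].
  destruct (walk_rev nb Hs _ _ _ H1) as [q [Hq Lq]].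
  destruct (dist_exists nb y z (length (q ++ p2))) as [e [He Le]].
  - exists (q ++ p2); split; [eapply walk_app; eauto|reflexivity].
  - exists e; split; [exact He|]. rewrite length_app in Le; lia.
Qed.

Theorem lemma5p6 (V : Type) (nb : V -> list V) (nstar : nat) (phi : R -> R) :
  is_graph nb ->
  (2 < nstar)%nat ->
  (forall t, INR nstar < t -> 1 < phi t) ->
  (forall s t, INR nstar < s -> s < t -> phi s < phi t) ->
  in_family nb nstar phi ->
  forall x : V, exists Nx : nat, forall N : nat, (Nx <= N)%nat ->
    forall y d, is_dist nb x y d -> (d <= N)%nat ->
      (deg nb y <= nstar)%nat \/ phi (INR (deg nb y)) <= 2 * INR N.
Proof.
  intros HG Hn Hphi1 Hmono Hfam x.
  assert (Hdist : forall a b, exists d, is_dist nb a b d).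
  { intros a b. destruct HG as [_ [_ [_ [_ Hc]]]]. destruct (Hc a b) as [p Hp].
    destruct (dist_exists nb a b (length p)) as [d [Hd _]]; [exists p; auto|].
    exists d; exact Hd. }
  assert (Key : forall y z d1 d2 N, is_dist nb x y d1 -> is_dist nb x z d2 ->
     (d1 <= N)%nat -> (d2 <= N)%nat -> (nstar < deg nb y)%nat -> (nstar < deg nb z)%nat ->
     y <> z -> phi (INR (deg nb y)) <= 2 * INR N).
  { intros y z d1 d2 N H1 H2 L1 L2 Hy Hz Hyz.
    destruct (close_dist nb x y z d1 d2 HG H1 H2) as [e [He Le]].
    pose proof (Hfam y z e Hy Hz Hyz He) as Hf.
    assert (Hle : phi (INR (deg nb y)) <= phi (INR (Nat.max (deg nb y) (deg nb z)))).
    { destruct (Nat.max_spec (deg nb y) (deg nb z)) as [[Hlt Heq]|[Hge Heq]]; rewrite Heq.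
      - left. apply Hmono; apply lt_INR; lia.
      - right; reflexivity. }
    assert (INR e <= 2 * INR N).
    { replace (2 * INR N) with (INR (2 * N)) by (rewrite mult_INR; simpl; ring).
      apply le_INR; lia. }
    lra. }
  destruct (classic (exists y1 y2, (nstar < deg nb y1)%nat /\ (nstar < deg nb y2)%nat /\ y1 <> y2))
    as [[y1 [y2 [H1 [H2 H12]]]]|Hno].
  - destruct (Hdist x y1) as [d1 Hd1]. destruct (Hdist x y2) as [d2 Hd2].
    exists (Nat.max d1 d2). intros N HN y d Hd HdN.
    destruct (le_lt_dec (deg nb y) nstar) as [Hl|Hh]; [left; exact Hl|right].
    destruct (classic (y = y1)) as [->|Hne].
    + apply (Key y1 y2 d d2 N); auto; lia.
    + apply (Key y y1 d d1 N); auto; lia.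
  - destruct (classic (exists y0, (nstar < deg nb y0)%nat)) as [[y0 Hy0]|Hno0].
    + destruct (INR_unbounded (phi (INR (deg nb y0)))) as [M HM].
      exists M. intros N HN y d Hd HdN.
      destruct (le_lt_dec (deg nb y) nstar) as [Hl|Hh]; [left; exact Hl|right].
      destruct (classic (y = y0)) as [->|Hne].
      * apply le_INR in HN. pose proof (pos_INR N). lra.
      * exfalso; apply Hno; exists y, y0; auto.
    + exists 0%nat. intros N _ y d _ _. left.
      destruct (le_lt_dec (deg nb y) nstar) as [Hl|Hh]; [exact Hl|].
      exfalso; apply Hno0; exists y; exact Hh.
Qed.
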